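(* For all $n\ge 1$, \[ v_{n,i}=\begin{cases}(2n-i)\,v_{n-1,i}+(i-1)\,v_{n-1,i-1}, & 1\le i\le 2n,\\ (2n-1)!!, & i=2n+1,\end{cases} \] where $v_{m,i}=0$ whenever $i<1$ or $i>2m+1$, and $v_{0,1}=0$.
   Context: For $n\ge 0$, let $\mathcal{C}^*_{n,1}$ be the set of fillings, bijectively with the integers $1,\dots,2n+1$, of the three-row shape having one top-row cell in column $1$, middle-row cells in columns $1,\dots,n$ and bottom-row cells in columns $1,\dots,n$, such that entries increase from left to right along the middle row and from bottom to top within each column, with no condition among entries of the bottom row. (For $n=0$ the shape is not admissible since the top cell has no cell below it, so $\mathcal{C}^*_{0,1}=\emptyset$.) For $1\le i\le 2n+1$, $v_{n,i}$ is the number of elements of $\mathcal{C}^*_{n,1}$ whose top cell contains $i$. Here $(2n-1)!!=1\cdot3\cdots(2n-1)$. *)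

(* Defs.v *)
From mathcomp Require Import all_boot.
Set Implicit Arguments. Unset Strict Implicit. Unset Printing Implicit Defensive.

(* Cells of the three-row shape of C*_{n,1}:
   - [inl tt]            : the unique top-row cell (column 1);
   - [inr (j, true)]     : middle-row cell in column j+1 (j : 'I_n);
   - [inr (j, false)]    : bottom-row cell in column j+1. *)
Definition cell (n : nat) : finType := (unit + ('I_n * bool))%type.

Definition top_cell n : cell n := inl tt.
Definition mid_cell n (j : 'I_n) : cell n := inr (j, true).
Definition bot_cell n (j : 'I_n) : cell n := inr (j, false).

(* A filling is a function from cells to 'I_(2n+1); the cell c holds the
   integer (f c).+1 in {1,...,2n+1}.  Injectivity = bijectivity here since
   #|cell n| = 2n+1. *)
Definition is_filling n (f : {ffun cell n -> 'I_(2 * n + 1)}) : bool :=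
  [&& injectiveb f,
      [forall j : 'I_n, forall k : 'I_n, (j < k)%N ==> (f (mid_cell j) < f (mid_cell k))%N],
      [forall j : 'I_n, (f (bot_cell j) < f (mid_cell j))%N] &
      [forall j : 'I_n, (val j == 0%N) ==> (f (mid_cell j) < f (top_cell n))%N]].

(* v_{n,i}: number of elements of C*_{n,1} whose top cell contains i.
   For n = 0 the shape is not admissible, so C*_{0,1} is empty. *)
Definition v (n i : nat) : nat :=
  if n == 0%N then 0%N
  else #|[pred f : {ffun cell n -> 'I_(2 * n + 1)} |
            is_filling f && ((f (top_cell n)).+1 == i)]|.

Definition dfact_odd (n : nat) : nat := \prod_(k < n) (2 * k + 1).

(* Main.v *)
Require Import Defs.
From mathcomp Require Import all_boot zify.

Definition Rb x y a := bump y (bump x a).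
Definition Ub x y a := unbump x (unbump y a).

Lemma R_lt x y a b : a < b -> Rb x y a < Rb x y b.
Proof. rewrite /Rb /bump; lia. Qed.
Lemma R_inj x y a b : Rb x y a = Rb x y b -> a = b.
Proof. rewrite /Rb /bump; lia. Qed.
Lemma R_nx x y a : x < y -> Rb x y a != x.
Proof. rewrite /Rb /bump; lia. Qed.
Lemma R_ny x y a : Rb x y a != y.
Proof. rewrite /Rb /bump; lia. Qed.
Lemma UR x y a : Ub x y (Rb x y a) = a.
Proof. rewrite /Rb /Ub /bump /unbump; lia. Qed.
Lemma RU x y a : x < y -> a != x -> a != y -> Rb x y (Ub x y a) = a.
Proof. rewrite /Rb /Ub /bump /unbump; lia. Qed.
Lemma U_lt x y a b : x < y -> a != x -> a != y -> b != x -> b != y -> a < b -> Ub x y a < Ub x y b.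
Proof. rewrite /Ub /unbump; lia. Qed.
Lemma R_bd x y a m : a < m -> Rb x y a < m.+2.
Proof. rewrite /Rb /bump; lia. Qed.
Lemma U_bd x y a m : x < y -> y < m.+2 -> a != x -> a != y -> a < m.+2 -> Ub x y a < m.
Proof. rewrite /Ub /unbump; lia. Qed.
Lemma U_inj x y a b : x < y -> a != x -> a != y -> b != x -> b != y -> Ub x y a = Ub x y b -> a = b.
Proof. rewrite /Ub /unbump; lia. Qed.

Definition F n := {ffun cell n -> 'I_(2 * n + 1)}.

Lemma fillingP n (f : F n) : reflect
  [/\ injective f,
      (forall j k : 'I_n, j < k -> f (mid_cell j) < f (mid_cell k)),
      (forall j : 'I_n, f (bot_cell j) < f (mid_cell j)) &
      (forall j : 'I_n, val j = 0 -> f (mid_cell j) < f (top_cell n))]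
  (is_filling f).
Proof.
apply: (iffP and4P) => [[/injectiveP H1 /forallP H2 /forallP H3 /forallP H4]|[H1 H2 H3 H4]]; split.
- exact: H1.
- by move=> j k jk; move/forallP/(_ k)/implyP: (H2 j); apply.
- by [].
- by move=> j j0; move/implyP: (H4 j); apply; apply/eqP.
- exact/injectiveP.
- by apply/forallP => j; apply/forallP => k; apply/implyP; apply: H2.
- by apply/forallP.
- by apply/forallP => j; apply/implyP => /eqP; apply: H4.
Qed.

Definition C n t := #|[pred f : F n | is_filling f && (f (top_cell n) == t :> nat)]|.

Lemma vC m i : 0 < m -> v m i = if i is i'.+1 then C m i' else 0.
Proof.
rewrite /v /C; case: m => // m _ /=.
case: i => [|i]; first by apply: eq_card0 => f; rewrite !inE andbF.
by apply: eq_card => f; rewrite !inE eqSS.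
Qed.

Lemma C1_small t : t < 2 -> C 1 t = 0.
Proof.
move=> ht; apply: eq_card0 => f; rewrite !inE.
apply/negP => /andP[/fillingP[_ _ H3 H4] /eqP E].
have := H3 ord0; have := H4 ord0 erefl; rewrite E => a b; clear -ht a b; lia.
Qed.

Definition f0 : F 1 := [ffun c : cell 1 => match c with inl _ => inord 2 | inr (_, b) => if b then inord 1 else inord 0 end].

Lemma C1_top_aux (f : F 1) : is_filling f -> (f (top_cell 1) : nat) = 2 -> f = f0.
Proof.
move=> /fillingP[_ _ H3 H4] E.
have h3 := H3 ord0; have h4 := H4 ord0 erefl; rewrite E in h4.
have hb : (f (bot_cell ord0) : nat) = 0 by lia.
have hm : (f (mid_cell ord0) : nat) = 1 by lia.
apply/ffunP => -[[]|[j b]]; rewrite ffunE; try rewrite (ord1 j); try case: b; apply: val_inj; rewrite /= inordK //; first [exact: E|exact: hm|exact: hb].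
Qed.

Lemma C1_top : C 1 2 = 1.
Proof.
apply: (@eq_card1 _ f0) => f; rewrite !inE; apply/idP/idP.
- by case/andP => H /eqP E; apply/eqP; apply: C1_top_aux.
- move/eqP => ->; apply/andP; split; last by rewrite ffunE inordK.
  apply/fillingP; split.
  + move=> [[]|[j1 b1]] [[]|[j2 b2]]; rewrite !ffunE; try rewrite (ord1 j1); try rewrite (ord1 j2);
      try (case: b1); try (case: b2); move=> E; try done; move: E => /(congr1 val) /=; rewrite !inordK //.
  + by move=> j k; rewrite (ord1 j) (ord1 k).
  + by move=> j; rewrite !ffunE !inordK.
  + by move=> j; rewrite !ffunE !inordK.
Qed.

Section Main.
Variables (k T : nat).
Hypothesis HT : T < 2 * k.+2 + 1.
Local Notation n := k.+1.
Local Notation N := k.+2.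

Definition yv := if T == 2 * N then 2 * N - 1 else 2 * N.
Local Notation y := yv.

Lemma y_neqT : y != T.
Proof. rewrite /yv; case: ifP => /eqP ?; lia. Qed.
Lemma y_lt : y < 2 * N + 1.
Proof. rewrite /yv; case: ifP => /eqP ?; lia. Qed.
Lemma bigT v : v < 2 * N + 1 -> y < v -> v = T.
Proof. rewrite /yv; case: ifP => /eqP ?; lia. Qed.
Lemma Ry a x : a < 2 * n + 1 -> a != Ub x y T -> x < y -> Rb x y a < y.
Proof. rewrite /yv; case: ifP => /eqP ?; rewrite /Rb /Ub /bump /unbump; lia. Qed.
Lemma RUT x : x < y -> x != T -> Rb x y (Ub x y T) = T.
Proof. rewrite /yv; case: ifP => /eqP ?; rewrite /Rb /Ub /bump /unbump; lia. Qed.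

Definition cmap (c : cell n) : cell N :=
  match c with inl t => inl t | inr (j, b) => inr (widen_ord (leqnSn n) j, b) end.

Lemma col_cases (j : 'I_N) : (exists j' : 'I_n, j = widen_ord (leqnSn n) j') \/ j = ord_max.
Proof.
case: (unliftP ord_max j) => [j' ->|->]; last by right.
left; exists j'; apply: val_inj => /=; have := ltn_ord j'; rewrite /bump; rewrite /bump /=; lia.
Qed.

Lemma cell_cases (c : cell N) :
  (exists c', c = cmap c') \/ c = inr (ord_max, true) \/ c = inr (ord_max, false).
Proof.
case: c => [[]|[j b]]; first by left; exists (inl tt).
case: (col_cases j) => [[j' ->]|->]; first by left; exists (inr (j', b)).
by right; case: b; auto.
Qed.

Lemma cmap_inj : injective cmap.
Proof.
by move=> [[]|[j1 b1]] [[]|[j2 b2]] //= [/val_inj -> ->].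
Qed.

Lemma cmap_neq c b : cmap c != inr (ord_max, b).
Proof.
case: c => [[]|[j b']] //=; apply/eqP => -[E _]; have := ltn_ord j; lia.
Qed.

Definition ins (p : F n * 'I_(2 * N + 1)) : F N := [ffun c : cell N => match c with
  | inl _ => inord (Rb p.2 y (p.1 (inl tt)))
  | inr (j, b) => if (j : nat) < n then inord (Rb p.2 y (p.1 (inr (inord j, b))))
                  else if b then inord y else p.2 end].

Lemma ins_old p c : (ins p (cmap c) : nat) = Rb p.2 y (p.1 c).
Proof.
have hb a : a < 2 * n + 1 -> Rb p.2 y a < (2 * N + 1) by move=> ha; have := @R_bd p.2 y a _ ha; lia.
case: c => [[]|[j b]]; rewrite ffunE /=.
  by rewrite inordK //; apply: hb.
by rewrite ltn_ord inord_val inordK //; apply: hb.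
Qed.

Lemma ins_mid p : (ins p (inr (ord_max, true)) : nat) = y.
Proof. by rewrite ffunE /= ltnn inordK //; apply: y_lt. Qed.
Lemma ins_bot p : ins p (inr (ord_max, false)) = p.2.
Proof. by rewrite ffunE /= ltnn. Qed.

Lemma ins_old_mid p a : (ins p (mid_cell (widen_ord (leqnSn n) a)) : nat) = Rb p.2 y (p.1 (mid_cell a)).
Proof. exact: (ins_old p (mid_cell a)). Qed.
Lemma ins_old_bot p a : (ins p (bot_cell (widen_ord (leqnSn n) a)) : nat) = Rb p.2 y (p.1 (bot_cell a)).
Proof. exact: (ins_old p (bot_cell a)). Qed.
Lemma ins_old_top p : (ins p (top_cell N) : nat) = Rb p.2 y (p.1 (top_cell n)).
Proof. exact: (ins_old p (top_cell n)). Qed.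

Lemma ins_A (g : F n) (x : 'I_(2 * N + 1)) : is_filling g -> (g (top_cell n) : nat) = Ub x y T ->
  x < y -> (x : nat) != T -> is_filling (ins (g, x)) && ((ins (g, x) (top_cell N) : nat) == T).
Proof.
move=> Hg Htop Hxy HxT.
case/fillingP: (Hg) => Ginj Gmid Gbot Gtop.
apply/andP; split; last by rewrite ins_old_top /= Htop RUT.
apply/fillingP; split.
- move=> c1 c2 E.
  have E' : (ins (g, x) c1 : nat) = ins (g, x) c2 by rewrite E.
  move: E'.
  case: (cell_cases c1) => [[c1' ->]|[->|->]]; case: (cell_cases c2) => [[c2' ->]|[->|->]] //;
    rewrite ?ins_old ?ins_mid ?ins_bot /=.
  + by move/R_inj/val_inj/Ginj ->.
  + by move=> E2; move: (R_ny x y (g c1')); rewrite E2 eqxx.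
  + by move=> E2; move: (@R_nx x y (g c1') Hxy); rewrite E2 eqxx.
  + by move=> E2; move: (R_ny x y (g c2')); rewrite -E2 eqxx.
  + by move=> E2; move: Hxy; rewrite E2 ltnn.
  + by move=> E2; move: (@R_nx x y (g c2') Hxy); rewrite -E2 eqxx.
  + by move=> E2; move: Hxy; rewrite -E2 ltnn.
- move=> j j'; case: (col_cases j) => [[a ->]|->]; case: (col_cases j') => [[b ->]|->] /=.
  + by move=> ab; rewrite !ins_old_mid; apply: R_lt; apply: Gmid.
  + move=> _; rewrite ins_old_mid ins_mid; apply: Ry => //.
    apply/eqP => E2; rewrite -Htop in E2; have := Ginj _ _ (val_inj E2); by [].
  + by have := ltn_ord b; lia.
  + by rewrite ltnn.
- move=> j; case: (col_cases j) => [[a ->]|->].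
  + by rewrite ins_old_mid ins_old_bot; apply: R_lt; apply: Gbot.
  + by rewrite ins_mid ins_bot.
- move=> j; case: (col_cases j) => [[a ->]|->] //= ha.
  by rewrite ins_old_mid ins_old_top; apply: R_lt; apply: Gtop.
Qed.

Definition del (f : F N) : F n * 'I_(2 * N + 1) :=
  let x := f (inr (ord_max, false)) in ([ffun c => inord (Ub x y (f (cmap c)))], x).

Definition Bset := [set p : F n * 'I_(2 * N + 1) |
  [&& is_filling p.1, (p.1 (top_cell n) : nat) == Ub p.2 y T, p.2 < y & (p.2 : nat) != T]].
Definition Aset := [set f : F N | is_filling f && ((f (top_cell N) : nat) == T)].

Lemma ins_del p : p \in Bset -> del (ins p) = p.
Proof.
case: p => g x; rewrite inE /= => /and4P[Hg Htop Hxy HxT].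
rewrite /del ins_bot /=; congr pair; apply/ffunP => c; rewrite ffunE; apply: val_inj.
by rewrite /= ins_old /= UR inord_val.
Qed.

Lemma card_cell : #|'I_(2 * N + 1)| <= #|cell N|.
Proof. rewrite card_ord /cell card_sum card_unit card_prod card_ord card_bool; lia. Qed.

Lemma A_props (f : F N) : is_filling f -> (f (top_cell N) : nat) = T ->
  [/\ (f (inr (ord_max, true)) : nat) = y, f (inr (ord_max, false)) < y &
      (f (inr (ord_max, false)) : nat) != T].
Proof.
move=> Hf Htop; case/fillingP: (Hf) => Finj Fmid Fbot Ftop.
have Hm : (f (inr (ord_max, true)) : nat) = y.
  have := inj_card_onto Finj card_cell (inord y).
  case/codomP => c Ec.
  have Ecv : (f c : nat) = y by rewrite -Ec inordK //; apply: y_lt.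
  have noT c' : (f c' : nat) = T -> c' = top_cell N.
    by move=> E; apply: Finj; apply: val_inj; rewrite /= E Htop.
  case: c Ec Ecv => [[]|[j b]] Ec Ecv.
  - by move: y_neqT; rewrite -Ecv Htop eqxx.
  - case: b Ec Ecv => Ec Ecv.
    + case: (col_cases j) => [[a Ea]|Ej]; last by rewrite -Ej.
      have := Fmid (widen_ord (leqnSn n) a) ord_max (ltn_ord a); rewrite -Ea.
      rewrite /mid_cell Ecv => h.
      have := noT _ (bigT _ (ltn_ord _) h); by [].
    + have := Fbot j; rewrite /bot_cell Ecv => h.
      have := noT _ (bigT _ (ltn_ord _) h); by [].
split => //.
- by have := Fbot ord_max; rewrite /mid_cell Hm.
- apply/eqP => E; rewrite -Htop in E; have := Finj _ _ (val_inj E); by [].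
Qed.

Lemma del_B (f : F N) : f \in Aset -> del f \in Bset /\ ins (del f) = f.
Proof.
rewrite inE => /andP[Hf /eqP Htop].
have [Hm Hxy HxT] := A_props f Hf Htop.
case/fillingP: (Hf) => Finj Fmid Fbot Ftop.
set x := f (inr (ord_max, false)) in Hm Hxy HxT *.
have old_nx c : (f (cmap c) : nat) != x.
  apply/eqP => E; have := Finj _ _ (val_inj E) => E2; by move: (cmap_neq c false); rewrite E2 eqxx.
have old_ny c : (f (cmap c) : nat) != y.
  apply/eqP => E; rewrite -Hm in E; have := Finj _ _ (val_inj E) => E2; by move: (cmap_neq c true); rewrite E2 eqxx.
have gv c : ((del f).1 c : nat) = Ub x y (f (cmap c)).
  have hb : Ub x y (f (cmap c)) < 2 * n + 1.
    apply: U_bd => //; [have := y_lt; lia | have := ltn_ord (f (cmap c)); lia].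
  rewrite ffunE inordK //; exact: hb.
split.
- rewrite inE /=; apply/and4P; split => //; last first.
    by apply/eqP; rewrite gv; congr Ub; exact: Htop.
  apply/fillingP; split.
  + move=> c1 c2 /(congr1 (@nat_of_ord _)); rewrite !gv => /U_inj E.
    apply: cmap_inj; apply: Finj; apply: val_inj; apply: E => //.
  + move=> a b ab; rewrite !gv; apply: U_lt => //.
    exact: (Fmid (widen_ord (leqnSn n) a) (widen_ord (leqnSn n) b)).
  + move=> a; rewrite !gv; apply: U_lt => //.
    exact: (Fbot (widen_ord (leqnSn n) a)).
  + move=> a ha; rewrite !gv; apply: U_lt => //.
    exact: (Ftop (widen_ord (leqnSn n) a)).
- apply/ffunP => c; apply: val_inj.
  case: (cell_cases c) => [[c' ->]|[->|->]].
  + by rewrite /= ins_old gv RU.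
  + by rewrite /= ins_mid Hm.
  + by rewrite ins_bot.
Qed.

Lemma card_AB : #|Aset| = #|Bset|.
Proof.
have -> : Aset = ins @: Bset.
  apply/setP => f; apply/idP/imsetP.
  - by move=> fA; have [dB E] := del_B f fA; exists (del f).
  - move=> [[g x] pB ->]; rewrite inE; move: pB; rewrite inE /= => /and4P[H1 /eqP H2 H3 H4].
    exact: ins_A.
apply: card_in_imset; apply: can_in_inj; exact: ins_del.
Qed.

Lemma card_B : #|Bset| = \sum_(x : 'I_(2 * N + 1) | (x < y) && ((x : nat) != T)) C n (Ub x y T).
Proof.
rewrite /C big_mkcond /=.
transitivity (\sum_(x : 'I_(2 * N + 1)) \sum_(g : F n) (((g, x) \in Bset) : nat)).
  rewrite exchange_big pair_big /= -sum1_card big_mkcond /=.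
  by apply: eq_big => [[g x]|[g x] _] //=; case: (_ \in Bset).
apply: eq_bigr => x _; case: ifP => hx.
- rewrite -sum1_card [RHS]big_mkcond /=; apply: eq_bigr => g _; rewrite !inE /=.
  by move/andP: hx => [-> ->]; rewrite !andbT.
- rewrite big1 // => g _; rewrite inE /=.
  by case: (is_filling g); case: (_ == _) => //=; rewrite hx.
Qed.

Lemma count_main : C N T = \sum_(x : 'I_(2 * N + 1) | (x < y) && ((x : nat) != T)) C n (Ub x y T).
Proof. by rewrite -card_B -card_AB /C; apply: eq_card => f; rewrite !inE. Qed.

End Main.

Lemma sum_const_on m1 m2 (P : pred nat) (G : nat -> nat) c :
  (forall i, m1 <= i < m2 -> P i /\ G i = c) -> \sum_(m1 <= i < m2 | P i) G i = (m2 - m1) * c.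
Proof.
move=> H; rewrite big_mkcond (eq_big_nat _ _ (F2 := fun _ => c)) ?sum_nat_const_nat //.
by move=> i /H [-> ->].
Qed.

Lemma sum_zero_on m1 m2 (P : pred nat) (G : nat -> nat) :
  (forall i, m1 <= i < m2 -> ~~ P i) -> \sum_(m1 <= i < m2 | P i) G i = 0.
Proof.
move=> H; rewrite big_mkcond (eq_big_nat _ _ (F2 := fun _ => 0)) ?sum_nat_const_nat ?muln0 //.
by move=> i /H /negbTE ->.
Qed.

Lemma rec1 k T : T < 2 * k.+2 -> C k.+2 T = T * C k.+1 T.-1 + (2 * k.+2 - T.+1) * C k.+1 T.
Proof.
move=> hT; rewrite (@count_main k T); last by lia.
have -> : yv k T = 2 * k.+2 by rewrite /yv; case: ifP => /eqP; lia.
rewrite -(big_mkord (fun x => (x < 2 * k.+2) && (x != T)) (fun x => C k.+1 (Ub x (2 * k.+2) T))).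
rewrite (@big_cat_nat _ _ _ T 0 (2 * k.+2 + 1)) //=; last by lia.
rewrite (@big_cat_nat _ _ _ T.+1 T (2 * k.+2 + 1)) //=; last by lia.
rewrite (@big_cat_nat _ _ _ (2 * k.+2) T.+1 (2 * k.+2 + 1)) //=; last by lia.
rewrite (@sum_const_on 0 T _ _ (C k.+1 T.-1)); last first.
  move=> i hi; split; first by apply/andP; split; lia.
  by rewrite /Ub /unbump; congr (C _ _); lia.
rewrite (@sum_zero_on T T.+1); last by move=> i hi; apply/negP => /andP[_]; lia.
rewrite (@sum_const_on T.+1 (2 * k.+2) _ _ (C k.+1 T)); last first.
  move=> i hi; split; first by apply/andP; split; lia.
  by rewrite /Ub /unbump; congr (C _ _); lia.
rewrite (@sum_zero_on (2 * k.+2)); last by move=> i hi; apply/negP => /andP[]; lia.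
by rewrite subn0 !addn0 add0n.
Qed.

Lemma rec2 k : C k.+2 (2 * k.+2) = (2 * k.+2 - 1) * C k.+1 (2 * k.+1).
Proof.
rewrite (@count_main k (2 * k.+2)); last by lia.
have -> : yv k (2 * k.+2) = 2 * k.+2 - 1 by rewrite /yv eqxx.
rewrite -(big_mkord (fun x => (x < 2 * k.+2 - 1) && (x != 2 * k.+2))
   (fun x => C k.+1 (Ub x (2 * k.+2 - 1) (2 * k.+2)))).
rewrite (@big_cat_nat _ _ _ (2 * k.+2 - 1) 0 (2 * k.+2 + 1)) //=; last by lia.
rewrite (@sum_const_on 0 (2 * k.+2 - 1) _ _ (C k.+1 (2 * k.+1))); last first.
  move=> i hi; split; first by apply/andP; split; lia.
  by rewrite /Ub /unbump; congr (C _ _); lia.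
rewrite (@sum_zero_on (2 * k.+2 - 1)); last by move=> i hi; apply/negP => /andP[]; lia.
by rewrite subn0 addn0.
Qed.

Lemma dfact_part k : C k.+1 (2 * k.+1) = dfact_odd k.+1.
Proof.
elim: k => [|k IH]; first by change (C 1 2 = dfact_odd 1); rewrite C1_top /dfact_odd big_ord1.
rewrite rec2 IH /dfact_odd [in RHS]big_ord_recr /= mulnC; congr (_ * _); lia.
Qed.

Theorem lemma19 (n : nat) : (1 <= n)%N ->
  (forall i : nat, (1 <= i <= 2 * n)%N ->
     v n i = ((2 * n - i) * v n.-1 i + (i - 1) * v n.-1 (i - 1))%N) /\
  v n (2 * n + 1) = dfact_odd n.
Proof.
case: n => // -[|k] _.
- have v0 i : v 0 i = 0 by [].
  split.
    move=> i /andP[hi1 hi2]; rewrite !v0 !muln0 vC //.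
    case: i hi1 hi2 => [|i] // _ hi; apply: C1_small; lia.
  by change (v 1 3 = dfact_odd 1); rewrite vC // C1_top /dfact_odd big_ord1.
split.
- move=> i /andP[hi1 hi2]; case: i hi1 hi2 => [|T] // _ hT.
  rewrite !vC // subn1 /= rec1; last by lia.
  case: T hT => [|T] hT /=; first by rewrite !mul0n !addn0 add0n.
  by rewrite addnC.
- by rewrite addn1 vC // dfact_part.
Qed.
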